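(* Let $\bm v_1,\dots,\bm v_N\in\mathbb{R}^r$, $\bm X := \mathsf{Gram}(\bm v_1,\dots,\bm v_N)$, and $\bm v := (\bm v_1;\dots;\bm v_N)\in\mathbb{R}^{rN}$. Then $\bm X\in\mathscr{C}^N$ if and only if $\sum_{i=1}^N\|\bm v_i\|_2^2 = N$ and there exists $\bm M\in\mathcal{B}_{\mathrm{sep}}(N,r)$ with $\bm v^\top\bm M\bm v = N^2$.
   Context: $\mathscr{C}^N := \mathrm{conv}\{\bm x\bm x^\top : \bm x\in\{\pm1\}^N\}$. A matrix $\bm M \in \mathbb{R}^{rN\times rN}$ is viewed as an $N\times N$ array of $r\times r$ blocks, $\bm M_{[ij]}$ denoting block $(i,j)$. $\mathcal{B}(N,r)$ is the set of symmetric $\bm M \in \mathbb{R}^{rN\times rN}$ with $\bm M \succeq 0$, $\bm M_{[ii]} = \bm I_r$ for all $i$, and $\bm M_{[ij]} = \bm M_{[ij]}^\top$ for all $i,j$. A matrix $\bm\rho\in\mathbb{R}^{rN\times rN}$ with trace $1$ is separable if $\bm\rho = \sum_{k=1}^m \rho_k(\bm a_k\otimes\bm b_k)(\bm a_k\otimes\bm b_k)^\top$ for some unit vectors $\bm a_k\in\mathbb{R}^N$, unit vectors $\bm b_k\in\mathbb{R}^r$, and $\rho_k\ge0$ with $\sum_k\rho_k = 1$ (here $\bm a\otimes\bm b\in\mathbb{R}^{rN}$ has $i$-th block $a_i\bm b$). $\mathcal{B}_{\mathrm{sep}}(N,r)$ is the set of $\bm M\in\mathcal{B}(N,r)$ such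 that $\frac{1}{rN}\bm M$ is separable. *)

(* Defs.v *)
From HB Require Import structures.
From mathcomp Require Import all_boot all_order all_algebra.
Set Implicit Arguments. Unset Strict Implicit. Unset Printing Implicit Defensive.
Import Order.TTheory GRing.Theory Num.Theory.
Local Open Scope ring_scope.

Definition sgvec (R : rcfType) (N : nat) (s : {ffun 'I_N -> bool}) : 'rV[R]_N :=
  \row_i (if s i then 1 else -1).

(* The cut polytope  C^N = conv { x x^T : x in {+-1}^N }
   (x is a row vector here, so x x^T of the paper is x^T *m x). *)
Definition cut_polytope (R : rcfType) (N : nat) (X : 'M[R]_N) : Prop :=
  exists w : {ffun {ffun 'I_N -> bool} -> R},
    (forall s, 0 <= w s) /\ \sum_s w s = 1 /\
    X = \sum_s w s *: ((sgvec R s)^T *m sgvec R s).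

(* Block (i,j) (an r x r matrix) of an (N*r) x (N*r) matrix; the global index of
   entry p of block i is mxvec_index i p = i*r + p. *)
Definition blk (R : rcfType) (N r : nat) (M : 'M[R]_(N * r)) (i j : 'I_N) : 'M[R]_r :=
  \matrix_(p, q) M (mxvec_index i p) (mxvec_index j q).

Definition psd (R : rcfType) (n : nat) (M : 'M[R]_n) : Prop :=
  forall u : 'rV[R]_n, 0 <= (u *m M *m u^T) 0 0.

Definition Bset (R : rcfType) (N r : nat) (M : 'M[R]_(N * r)) : Prop :=
  [/\ M^T = M, psd M,
      forall i, blk M i i = 1%:M &
      forall i j, (blk M i j)^T = blk M i j].

(* a (x) b : the vector whose i-th block is a_i b. *)
Definition kronv (R : rcfType) (N r : nat) (a : 'rV[R]_N) (b : 'rV[R]_r) : 'rV[R]_(N * r) :=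
  mxvec (a^T *m b).

Definition sqnorm (R : rcfType) (n : nat) (u : 'rV[R]_n) : R := (u *m u^T) 0 0.

Definition separable (R : rcfType) (N r : nat) (rho : 'M[R]_(N * r)) : Prop :=
  \tr rho = 1 /\
  exists (m : nat) (w : 'I_m -> R) (a : 'I_m -> 'rV[R]_N) (b : 'I_m -> 'rV[R]_r),
    [/\ forall k, 0 <= w k, \sum_k w k = 1,
        forall k, sqnorm (a k) = 1, forall k, sqnorm (b k) = 1 &
        rho = \sum_k w k *: ((kronv (a k) (b k))^T *m kronv (a k) (b k))].

Definition Bsep (R : rcfType) (N r : nat) (M : 'M[R]_(N * r)) : Prop :=
  Bset M /\ separable (((N * r)%:R)^-1 *: M).

Definition gram (R : rcfType) (N r : nat) (V : 'M[R]_(N, r)) : 'M[R]_N := V *m V^T.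

(* Main.v *)
Require Import Defs.
From HB Require Import structures.
From mathcomp Require Import all_boot all_order all_algebra.
From mathcomp Require Import ring lra.
Set Implicit Arguments. Unset Strict Implicit. Unset Printing Implicit Defensive.
Import Order.TTheory GRing.Theory Num.Theory.
Local Open Scope ring_scope.

Section H.
Variable R : rcfType.

Lemma sum_mxvec m n (f : 'I_(m * n) -> R) :
  \sum_k f k = \sum_i \sum_j f (mxvec_index i j).
Proof.
rewrite pair_big /= (reindex (uncurry (@mxvec_index m n))) //=.
  by apply: eq_bigr => -[i j].
exact: curry_mxvec_bij.
Qed.

Lemma kronvE N r (a : 'rV[R]_N) (b : 'rV[R]_r) i p :
  kronv a b 0 (mxvec_index i p) = a 0 i * b 0 p.
Proof. by rewrite /kronv mxvecE !mxE big_ord1 !mxE. Qed.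

Lemma sqnormE n (u : 'rV[R]_n) : sqnorm u = \sum_j u 0 j ^+ 2.
Proof. by rewrite /sqnorm mxE; apply: eq_bigr => j _; rewrite mxE expr2. Qed.

Lemma mmT0 m n (B : 'M[R]_(m, n)) : B *m B^T = 0 -> B = 0.
Proof.
move=> h; apply/matrixP => i j; rewrite mxE.
have := congr1 (fun M : 'M[R]_m => M i i) h; rewrite !mxE => /eqP.
rewrite psumr_eq0 => [/allP H|k _]; last by rewrite mxE -expr2 sqr_ge0.
have := H j (mem_index_enum _); rewrite mxE -expr2 /= sqrf_eq0 => /eqP //.
Qed.

Lemma gram_unit m n (A : 'M[R]_(m, n)) : row_free A -> A *m A^T \in unitmx.
Proof.
move=> hA; rewrite -row_free_unit -kermx_eq0.
set K := kermx _.
have hK : K *m (A *m A^T) = 0 by exact: mulmx_ker.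
have : (K *m A) *m (K *m A)^T = 0 by rewrite trmx_mul mulmxA -(mulmxA K A) hK mul0mx.
move/mmT0 => hKA.
have : (K <= kermx A)%MS by apply/sub_kermxP.
by rewrite -kermx_eq0 in hA; rewrite (eqP hA) submx0.
Qed.


Lemma dot_tr n (y z : 'rV[R]_n) : (z *m y^T) 0 0 = (y *m z^T) 0 0.
Proof. by rewrite -{1}(trmxK z) -trmx_mul mxE. Qed.

Lemma quadS n m (g : 'I_m -> R) (z : 'I_m -> 'rV[R]_n) (x y : 'rV[R]_n) :
  (x *m (\sum_k g k *: ((z k)^T *m z k)) *m y^T) 0 0
  = \sum_k g k * ((x *m (z k)^T) 0 0 * (y *m (z k)^T) 0 0).
Proof.
rewrite mulmx_sumr mulmx_suml summxE; apply: eq_bigr => k _.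
rewrite -scalemxAr -scalemxAl mxE; congr (_ * _).
rewrite (mulmxA x) -(mulmxA (x *m (z k)^T)) mxE big_ord1; congr (_ * _); exact: dot_tr.
Qed.

Lemma dotE n (x y : 'rV[R]_n) : (x *m y^T) 0 0 = \sum_j x 0 j * y 0 j.
Proof. by rewrite mxE; apply: eq_bigr => j _; rewrite mxE. Qed.

Lemma vK N r (X : 'M[R]_(N, r)) (a : 'rV[R]_N) (b : 'rV[R]_r) :
  (mxvec X *m (kronv a b)^T) 0 0 = \sum_i a 0 i * (row i X *m b^T) 0 0.
Proof.
rewrite dotE sum_mxvec; apply: eq_bigr => i _.
rewrite dotE mulr_sumr; apply: eq_bigr => p _.
by rewrite mxvecE kronvE mxE; ring.
Qed.

Lemma kvK N r (u : 'rV[R]_r) (a : 'rV[R]_N) (b : 'rV[R]_r) i :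
  (kronv (delta_mx 0 i) u *m (kronv a b)^T) 0 0 = a 0 i * (u *m b^T) 0 0.
Proof.
rewrite dotE sum_mxvec (bigD1 i) //= [X in _ + X]big1 ?addr0.
  rewrite dotE mulr_sumr; apply: eq_bigr => p _.
  by rewrite !kronvE mxE !eqxx /=; ring.
move=> j /negbTE hj; apply: big1 => p _.
by rewrite !kronvE mxE hj andbF /=; ring.
Qed.


Lemma blkE N r m (c : R) (w : 'I_m -> R) (a : 'I_m -> 'rV[R]_N) (b : 'I_m -> 'rV[R]_r) i j :
  blk (c *: \sum_k w k *: ((kronv (a k) (b k))^T *m kronv (a k) (b k))) i j
  = \sum_k (c * w k * (a k 0 i * a k 0 j)) *: ((b k)^T *m b k).
Proof.
apply/matrixP => p q; rewrite !mxE !summxE mulr_sumr; apply: eq_bigr => k _.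
rewrite !mxE !big_ord1 !mxE !kronvE; ring.
Qed.


Definition sg (x : R) : R := if 0 <= x then 1 else -1.

Lemma sg_lemma (n x y : R) : n * x ^+ 2 = 1 -> n * y ^+ 2 = 1 ->
  sg x * sg y = n * x * y.
Proof.
move=> hx hy.
have e : forall u v : R, 0 <= u -> 0 <= v -> n * u ^+ 2 = 1 -> n * v ^+ 2 = 1 -> u = v.
  move=> u v hu hv hu2 hv2; apply/eqP; rewrite -(@eqrXn2 _ 2) //.
  have hn : n != 0 by apply/eqP => h0; move: hu2; rewrite h0 mul0r => /eqP; rewrite eq_sym oner_eq0.
  by rewrite -(inj_eq (mulfI hn)) hu2 hv2.
have hneg : forall u : R, (0 <= u) = false -> 0 <= - u.
  by move=> u hu; rewrite oppr_ge0 ltW // ltNge hu.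
rewrite /sg; case: ifP => hx0; case: ifP => hy0.
- by rewrite (e x y) // mulr1 -hy; ring.
- have hxy : x = - y by apply: e; rewrite ?sqrrN ?hneg.
  by rewrite hxy mul1r -hy; ring.
- have hxy : - x = y by apply: e; rewrite ?sqrrN ?hneg.
  by rewrite -hxy mulr1 -hx; ring.
- have hxy : - x = - y by apply: e; rewrite ?sqrrN ?hneg.
  by rewrite -(opprK x) hxy opprK mulrNN mulr1 -hy; ring.
Qed.


Lemma sum_ind (I J : finType) (h : I -> J) (f : I -> R) (g : J -> R) :
  \sum_j (\sum_i (h i == j)%:R * f i) * g j = \sum_i f i * g (h i).
Proof.
under eq_bigr do rewrite mulr_suml.
rewrite exchange_big; apply: eq_bigr => i _.
rewrite (bigD1 (h i)) //= big1 ?addr0 ?eqxx ?mul1r //.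
by move=> j hj; rewrite eq_sym (negbTE hj) mul0r mul0r.
Qed.


Lemma quadSI n (I : finType) (g : I -> R) (z : I -> 'rV[R]_n) (x y : 'rV[R]_n) :
  (x *m (\sum_k g k *: ((z k)^T *m z k)) *m y^T) 0 0
  = \sum_k g k * ((x *m (z k)^T) 0 0 * (y *m (z k)^T) 0 0).
Proof.
rewrite mulmx_sumr mulmx_suml summxE; apply: eq_bigr => k _.
rewrite -scalemxAr -scalemxAl mxE; congr (_ * _).
rewrite (mulmxA x) -(mulmxA (x *m (z k)^T)) mxE big_ord1; congr (_ * _); exact: dot_tr.
Qed.

Lemma blkEI N r (I : finType) (w : I -> R) (a : I -> 'rV[R]_N) (b : I -> 'rV[R]_r) i j :
  blk (\sum_k w k *: ((kronv (a k) (b k))^T *m kronv (a k) (b k))) i j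
  = \sum_k (w k * (a k 0 i * a k 0 j)) *: ((b k)^T *m b k).
Proof.
apply/matrixP => p q; rewrite !mxE !summxE; apply: eq_bigr => k _.
rewrite !mxE !big_ord1 !mxE !kronvE; ring.
Qed.

Lemma trace_blk N r (M : 'M[R]_(N * r)) : \tr M = \sum_i \tr (blk M i i).
Proof.
rewrite /mxtrace sum_mxvec; apply: eq_bigr => i _; apply: eq_bigr => p _.
by rewrite mxE.
Qed.

Lemma sqnorm_kron N r (a : 'rV[R]_N) (b : 'rV[R]_r) :
  sqnorm (kronv a b) = sqnorm a * sqnorm b.
Proof.
rewrite !sqnormE sum_mxvec mulr_suml; apply: eq_bigr => i _.
rewrite mulr_sumr; apply: eq_bigr => p _; rewrite kronvE; ring.
Qed.

Lemma kronvZ N r (c d : R) (a : 'rV[R]_N) (b : 'rV[R]_r) :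
  kronv (c *: a) (d *: b) = (c * d) *: kronv a b.
Proof.
apply/rowP => k; case/mxvec_indexP: k => i p.
by rewrite !mxE kronvE !mxE kronvE; ring.
Qed.

Lemma sqnorm_ge0 n (u : 'rV[R]_n) : 0 <= sqnorm u.
Proof. by rewrite sqnormE; apply: sumr_ge0 => j _; exact: sqr_ge0. Qed.

Lemma sqnorm_eq0 n (u : 'rV[R]_n) : sqnorm u = 0 -> u = 0.
Proof.
rewrite sqnormE => h; apply/rowP => j; rewrite mxE.
have /eqP := psumr_eq0P (fun l _ => sqr_ge0 (u 0 l)) h isT (i := j).
by rewrite sqrf_eq0 => /eqP.
Qed.

Lemma sqnormZ n (c : R) (u : 'rV[R]_n) : sqnorm (c *: u) = c ^+ 2 * sqnorm u.
Proof. by rewrite !sqnormE mulr_sumr; apply: eq_bigr => j _; rewrite mxE; ring. Qed.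

Definition nrm n (hn : (0 < n)%N) (u : 'rV[R]_n) : 'rV[R]_n :=
  if u == 0 then delta_mx 0 (Ordinal hn) else (Num.sqrt (sqnorm u))^-1 *: u.

Lemma nrm_unit n (hn : (0 < n)%N) (u : 'rV[R]_n) : sqnorm (nrm hn u) = 1.
Proof.
rewrite /nrm; case: eqP => [_|hu].
  rewrite sqnormE (bigD1 (Ordinal hn)) //= big1 ?addr0 ?mxE ?eqxx ?expr1n //.
  by move=> j hj; rewrite mxE (negbTE hj) andbF expr0n.
rewrite sqnormZ exprVn sqr_sqrtr ?sqnorm_ge0 // mulVf //.
by apply/eqP => /sqnorm_eq0.
Qed.

Lemma nrm_eq n (hn : (0 < n)%N) (u : 'rV[R]_n) :
  u = Num.sqrt (sqnorm u) *: nrm hn u.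
Proof.
rewrite /nrm; case: eqP => [->|hu]; first by rewrite /sqnorm mul0mx mxE sqrtr0 scale0r.
rewrite scalerA mulfV ?scale1r //.
rewrite sqrtr_eq0 -ltNge lt_def sqnorm_ge0 andbT.
by apply/eqP => /sqnorm_eq0.
Qed.

Lemma kron_norm N r (hN : (0 < N)%N) (hr : (0 < r)%N) (a : 'rV[R]_N) (u : 'rV[R]_r) :
  (kronv a u)^T *m kronv a u
  = (sqnorm a * sqnorm u) *: ((kronv (nrm hN a) (nrm hr u))^T *m kronv (nrm hN a) (nrm hr u)).
Proof.
rewrite {1 2}(nrm_eq hN a) {1 2}(nrm_eq hr u) kronvZ linearZ /= linearZ /= -scalemxAl scalerA.
congr (_ *: _).
by rewrite -expr2 exprMn !sqr_sqrtr ?sqnorm_ge0.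
Qed.

Lemma dotV N r (X : 'M[R]_(N, r)) (a : 'rV[R]_N) (b : 'rV[R]_r) :
  \sum_i a 0 i * (row i X *m b^T) 0 0 = (a *m X *m b^T) 0 0.
Proof.
rewrite dotE; under [RHS]eq_bigr do rewrite mxE mulr_suml.
rewrite exchange_big /=; apply: eq_bigr => i _.
rewrite dotE mulr_sumr; apply: eq_bigr => p _; rewrite !mxE; ring.
Qed.

Lemma sum_rowQ n m (Q : 'M[R]_(m, n)) :
  \sum_p (row p Q)^T *m row p Q = Q^T *m Q.
Proof.
apply/matrixP => i j; rewrite summxE mxE; apply: eq_bigr => p _.
by rewrite !mxE big_ord1 !mxE.
Qed.

Lemma dot_delta n (u : 'rV[R]_n) l : (u *m (delta_mx 0 l : 'rV[R]_n)^T) 0 0 = u 0 l.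
Proof.
rewrite dotE (bigD1 l) //= big1 => [|j hj]; last first.
  by rewrite !mxE (negbTE hj) andbF mulr0.
by rewrite addr0 !mxE !eqxx mulr1.
Qed.

End H.

Lemma if_dir (R : rcfType) (N r : nat) (hN : (0 < N)%N) (V : 'M[R]_(N, r)) :
  \sum_(i < N) sqnorm (row i V) = N%:R ->
  (exists M : 'M[R]_(N * r),
     Bsep M /\ (mxvec V *m M *m (mxvec V)^T) 0 0 = (N ^ 2)%:R) ->
  cut_polytope (gram V).
Proof.
move=> hsum [M [[[_ _ hdiag _] [htr [m [w [a [b [w0 w1 an bn hrho]]]]]]] hval]].
set c : R := (N * r)%:R in hrho htr.
have hc : c != 0.
  apply/eqP => hc0; move: htr; rewrite hc0 invr0 scale0r mxtrace0 => /eqP.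
  by rewrite eq_sym oner_eq0.
have cpos : 0 < c by rewrite lt_def hc ler0n.
have hM : M = c *: \sum_k w k *: ((kronv (a k) (b k))^T *m kronv (a k) (b k)).
  by rewrite -hrho scalerA mulfV ?scale1r.
clearbody c.
pose A : 'I_m -> 'I_N -> R := fun k i => a k 0 i.
pose cc : 'I_m -> 'I_N -> R := fun k i => (row i V *m (b k)^T) 0 0.
pose t : 'I_m -> R := fun k => (mxvec V *m (kronv (a k) (b k))^T) 0 0.
have hA : forall k, \sum_i A k i ^+ 2 = 1 by move=> k; rewrite -sqnormE an.
have ht : forall k, t k = \sum_i A k i * cc k i by move=> k; rewrite /t vK.
have hdiagM : forall i, \sum_k (c * w k * (A k i * A k i)) *: ((b k)^T *m b k) = 1%:M.
  by move=> i; rewrite -blkE -hM hdiag.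
have F1M : \sum_k (c * w k) *: ((b k)^T *m b k) = N%:R *: 1%:M.
  have : \sum_(i < N) \sum_k (c * w k * (A k i * A k i)) *: ((b k)^T *m b k)
         = \sum_(i < N) 1%:M by apply: eq_bigr => i _; exact: hdiagM.
  rewrite exchange_big sumr_const card_ord -scaler_nat => <-.
  apply: eq_bigr => k _; rewrite -scaler_suml; congr (_ *: _).
  rewrite -mulr_sumr (eq_bigr (fun i => A k i ^+ 2)) ?hA ?mulr1 // => i _.
have E1 : c * \sum_k w k * (t k * t k) = (N ^ 2)%:R.
  by rewrite -hval hM -scalemxAr -scalemxAl mxE quadS.
have E2 : forall i, \sum_k c * w k * (cc k i * cc k i) = N%:R * sqnorm (row i V).
  move=> i; have := congr1 (fun B => (row i V *m B *m (row i V)^T) 0 0) F1M.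
  by rewrite /= quadS -scalemxAr -scalemxAl mxE mulmx1.
have gramE : forall i j, gram V i j = (row i V *m (row j V)^T) 0 0.
  by move=> i j; rewrite !mxE; apply: eq_bigr => p _; rewrite !mxE.
have E3 : forall i j, \sum_k c * w k * (cc k i * cc k j) = N%:R * gram V i j.
  move=> i j; have := congr1 (fun B => (row i V *m B *m (row j V)^T) 0 0) F1M.
  by rewrite /= quadS -scalemxAr -scalemxAl mxE mulmx1 gramE.
have E4 : forall i, \sum_k c * w k * (A k i * A k i) * (cc k i * cc k i) = sqnorm (row i V).
  move=> i; have := congr1 (fun B => (row i V *m B *m (row i V)^T) 0 0) (hdiagM i).
  by rewrite /= quadS mulmx1.
have hN0 : (N%:R : R) != 0 by rewrite pnatr_eq0 -lt0n.
have hD : forall k, \sum_i (cc k i - t k * A k i) ^+ 2 = \sum_i cc k i * cc k i - t k * t k.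
  move=> k.
  have -> : \sum_i (cc k i - t k * A k i) ^+ 2 = \sum_i cc k i * cc k i
      - 2 * t k * (\sum_i A k i * cc k i) + t k ^+ 2 * \sum_i A k i ^+ 2.
    by rewrite !mulr_sumr -sumrB -big_split /=; apply: eq_bigr => i _; ring.
  by rewrite -ht hA; ring.
have hsumD : \sum_k c * w k * \sum_i (cc k i - t k * A k i) ^+ 2 = 0.
  under eq_bigr do rewrite hD.
  rewrite (eq_bigr (fun k => \sum_i c * w k * (cc k i * cc k i) - c * (w k * (t k * t k)))); last first.
    by move=> k _; rewrite mulrBr mulr_sumr mulrA.
  rewrite sumrB -mulr_sumr E1 exchange_big /= (eq_bigr _ (fun i _ => E2 i)) -mulr_sumr hsum.
  by rewrite natrX expr2 subrr.
have G2 : forall k, w k = 0 \/ forall i, cc k i = t k * A k i.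
  move=> k; have [->|wn] := eqVneq (w k) 0; [by left | right].
  have hpos : forall j : 'I_m, true -> 0 <= c * w j * \sum_i (cc j i - t j * A j i) ^+ 2.
    move=> j _; apply: mulr_ge0; first by apply: mulr_ge0 => //; exact: ltW.
    by apply: sumr_ge0 => i _; exact: sqr_ge0.
  have /eqP := psumr_eq0P hpos hsumD isT (i := k).
  rewrite !mulf_eq0 (negbTE hc) (negbTE wn) /= => /eqP h1 i.
  apply/eqP; rewrite -subr_eq0 -sqrf_eq0; apply/eqP.
  by apply: (psumr_eq0P _ h1) => // j _; exact: sqr_ge0.
pose mu : 'I_m -> R := fun k => c * w k * (t k * t k).
have hmu0 : forall k, 0 <= mu k.
  move=> k; apply: mulr_ge0; first by apply: mulr_ge0 => //; exact: ltW.
  by rewrite -expr2 sqr_ge0.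
have G3 : forall i, \sum_k mu k * (A k i * A k i) * (A k i * A k i) = sqnorm (row i V).
  move=> i; rewrite -E4; apply: eq_bigr => k _; rewrite /mu.
  case: (G2 k) => [->|->]; first by rewrite !mulr0 !mul0r.
  ring.
have G4 : \sum_k mu k = N%:R ^+ 2.
  rewrite -natrX -E1 mulr_sumr; apply: eq_bigr => k _; rewrite /mu /=; ring.
have G6 : forall i j, N%:R * gram V i j = \sum_k mu k * (A k i * A k j).
  move=> i j; rewrite -E3; apply: eq_bigr => k _; rewrite /mu.
  by case: (G2 k) => [->|h]; [ring | rewrite !h; ring].
have hS : forall k, \sum_i (A k i ^+ 2 - N%:R^-1) ^+ 2
    = \sum_i (A k i * A k i) * (A k i * A k i) - N%:R^-1.
  move=> k.
  have -> : \sum_i (A k i ^+ 2 - N%:R^-1) ^+ 2 = \sum_i (A k i * A k i) * (A k i * A k i)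
      - 2 * N%:R^-1 * (\sum_i A k i ^+ 2) + \sum_(i < N) N%:R^-1 ^+ 2.
    by rewrite !mulr_sumr -sumrB -big_split /=; apply: eq_bigr => i _; ring.
  rewrite hA sumr_const card_ord -mulr_natr; field.
  done.
have hT : \sum_k mu k * \sum_i (A k i ^+ 2 - N%:R^-1) ^+ 2 = 0.
  rewrite (eq_bigr (fun k => \sum_i mu k * (A k i * A k i) * (A k i * A k i)
                               - mu k * N%:R^-1)); last first.
    by move=> k _; rewrite hS mulrBr mulr_sumr; congr (_ + _); apply: eq_bigr => i _; rewrite !mulrA.
  rewrite sumrB exchange_big /= -mulr_suml G4 (eq_bigr _ (fun i _ => G3 i)) hsum.
  by field.
have G5 : forall k, mu k != 0 -> forall i, N%:R * A k i ^+ 2 = 1.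
  move=> k hk i.
  have hpos : forall j : 'I_m, true -> 0 <= mu j * \sum_i (A j i ^+ 2 - N%:R^-1) ^+ 2.
    by move=> j _; apply: mulr_ge0 => //; apply: sumr_ge0 => l _; exact: sqr_ge0.
  have /eqP := psumr_eq0P hpos hT isT (i := k).
  rewrite mulf_eq0 (negbTE hk) /= => /eqP h1.
  have /eqP := psumr_eq0P (fun l _ => sqr_ge0 _) h1 isT (i := i).
  by rewrite sqrf_eq0 subr_eq0 => /eqP ->; rewrite mulfV.
pose sk : 'I_m -> {ffun 'I_N -> bool} := fun k => [ffun i => 0 <= A k i].
have skE : forall k i, sgvec R (sk k) 0 i = sg (A k i) by move=> k i; rewrite mxE ffunE.
exists [ffun s => \sum_k (sk k == s)%:R * (mu k / N%:R ^+ 2)]; split; [|split].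
- move=> s; rewrite ffunE; apply: sumr_ge0 => k _; apply: mulr_ge0; first exact: ler0n.
  by apply: mulr_ge0 => //; rewrite invr_ge0 exprn_ge0 // ler0n.
- rewrite (eq_bigr (fun s => (\sum_k (sk k == s)%:R * (mu k / N%:R ^+ 2)) * 1)); last first.
    by move=> s _; rewrite ffunE mulr1.
  rewrite sum_ind (eq_bigr (fun k => mu k / N%:R ^+ 2)); last by move=> k _; rewrite mulr1.
  by rewrite -mulr_suml G4 mulfV // expf_neq0.
apply/matrixP => i j; rewrite summxE.
rewrite (eq_bigr (fun s => (\sum_k (sk k == s)%:R * (mu k / N%:R ^+ 2))
                  * (sgvec R s 0 i * sgvec R s 0 j))); last first.
  by move=> s _; rewrite !mxE big_ord1 !mxE ffunE.
rewrite sum_ind.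
have -> : gram V i j = N%:R^-1 * (N%:R * gram V i j) by rewrite mulrA mulVf ?mul1r.
rewrite G6 mulr_sumr; apply: eq_bigr => k _; rewrite !skE.
have [->|hk] := eqVneq (mu k) 0; first by rewrite !mul0r mulr0.
rewrite (sg_lemma (G5 k hk i) (G5 k hk j)); field.
by rewrite hN0.
Qed.

Lemma onlyif_dir (R : rcfType) (N r : nat) (hN : (0 < N)%N) (V : 'M[R]_(N, r)) :
  cut_polytope (gram V) ->
  \sum_(i < N) sqnorm (row i V) = N%:R /\
  exists M : 'M[R]_(N * r),
     Bsep M /\ (mxvec V *m M *m (mxvec V)^T) 0 0 = (N ^ 2)%:R.
Proof.
case=> w [w0 [w1 hX]].
pose x : {ffun 'I_N -> bool} -> 'rV[R]_N := fun s => sgvec R s.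
have x2 : forall (s : {ffun 'I_N -> bool}) (i : 'I_N), x s 0 i * x s 0 i = 1.
  by move=> s i; rewrite /x /sgvec mxE; case: (s i); rewrite ?mulr1 ?mulrNN ?mulr1.
have gramE : forall i j, gram V i j = (row i V *m (row j V)^T) 0 0.
  by move=> i j; rewrite !mxE; apply: eq_bigr => p _; rewrite !mxE.
have hXE : forall i j, gram V i j = \sum_s w s * (x s 0 i * x s 0 j).
  by move=> i j; rewrite hX summxE; apply: eq_bigr => s _; rewrite !mxE big_ord1 !mxE.
have hsq : forall i, sqnorm (row i V) = 1.
  move=> i; rewrite /sqnorm -gramE hXE -w1; apply: eq_bigr => s _.
  by rewrite x2 mulr1.
have hsum : \sum_(i < N) sqnorm (row i V) = N%:R.
  by rewrite (eq_bigr _ (fun i _ => hsq i)) sumr_const card_ord.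
split=> //.
have hr : (0 < r)%N.
  case: (posnP r) => // r0; move: (hsq (Ordinal hN)); subst r.
  by rewrite sqnormE big_ord0 => /eqP; rewrite eq_sym oner_eq0.
have hxN : forall s, sqnorm (x s) = N%:R.
  by move=> s; rewrite sqnormE (eq_bigr _ (fun i _ => etrans (expr2 _) (x2 s i))) sumr_const card_ord.
pose C := row_base V.
pose F := V *m pinvmx C.
have hFC : F *m C = V by rewrite mulmxKpV // eq_row_base submx_refl.
have hGC : C *m C^T \in unitmx := gram_unit (row_base_free V).
have hFr : row_free F^T.
  rewrite /row_free mxrank_tr eqn_leq rank_leq_col /=.
  by rewrite -{1}hFC mxrankM_maxl.
have hGF : F^T *m F \in unitmx by have := gram_unit hFr; rewrite trmxK.
clearbody F C.
pose iGC := invmx (C *m C^T).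
pose iGF := invmx (F^T *m F).
have iGCs : iGC^T = iGC by rewrite /iGC trmx_inv trmx_mul trmxK.
have iGFs : iGF^T = iGF by rewrite /iGF trmx_inv trmx_mul trmxK.
have eGC : C *m C^T *m iGC = 1%:M by exact: mulmxV.
have eGC' : iGC *m (C *m C^T) = 1%:M by exact: mulVmx.
have eGF : F^T *m F *m iGF = 1%:M by exact: mulmxV.
clearbody iGC iGF.
have hVT : V^T = C^T *m F^T by rewrite -trmx_mul hFC.
pose P := C^T *m iGC *m C.
pose Q : 'M[R]_r := 1%:M - P.
pose Lt := F *m iGF *m iGC *m C.
have hVTLt : V^T *m Lt = P.
  rewrite hVT /Lt /P !mulmxA -(mulmxA C^T F^T F) -(mulmxA C^T (F^T *m F)) eGF mulmx1.
  by [].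
have hPs : P^T = P by rewrite /P !trmx_mul trmxK iGCs mulmxA.
have hPP : P *m P = P.
  rewrite /P !mulmxA -(mulmxA (C^T *m iGC) C C^T) -(mulmxA (C^T *m iGC)) eGC mulmx1.
  by [].
have hVP : V *m P = V.
  by rewrite -hFC /P !mulmxA -(mulmxA F C C^T) -(mulmxA F (C *m C^T)) eGC mulmx1.
have hXLt : Lt^T *m gram V *m Lt = P.
  have e : Lt^T *m V = P by rewrite -[V]trmxK -trmx_mul hVTLt hPs.
  by rewrite /gram mulmxA e -mulmxA hVTLt hPP.
have hVQ : V *m Q = 0 by rewrite /Q mulmxBr mulmx1 hVP subrr.
have hQs : Q^T = Q by rewrite /Q linearB /= trmx1 hPs.
have hQQ : Q^T *m Q = Q.
  by rewrite hQs /Q mulmxBr mulmx1 !mulmxBl mul1mx hPP subrr subr0.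
have hin : forall s, w s != 0 -> (x s <= V^T)%MS.
  move=> s ws; rewrite submxE.
  have hK : V^T *m cokermx V^T = 0 := mulmx_coker V^T.
  move: hK; set K := cokermx V^T; clearbody K => hK.
  apply/eqP/rowP => l; rewrite [RHS]mxE.
  pose e := (delta_mx 0 l : 'rV[R]_N) *m K^T.
  have h0 : (e *m gram V *m e^T) 0 0 = 0.
    by rewrite /gram /e trmx_mul trmxK -!mulmxA (mulmxA V^T K) hK !(mul0mx, mulmx0) mxE.
  rewrite hX quadSI in h0.
  have hpos : forall t : {ffun 'I_N -> bool}, true ->
      0 <= w t * ((e *m (x t)^T) 0 0 * (e *m (x t)^T) 0 0).
    by move=> t _; apply: mulr_ge0 => //; rewrite -expr2 sqr_ge0.
  have /eqP := psumr_eq0P hpos h0 isT (i := s).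
  rewrite mulf_eq0 (negbTE ws) /= -expr2 sqrf_eq0 => /eqP.
  by rewrite dot_tr /e trmx_mul trmxK mulmxA dot_delta.
have hLtV : forall s, w s != 0 -> x s *m Lt *m V^T = x s.
  move=> s ws.
  have hF : (x s <= F^T)%MS by apply: submx_trans (hin s ws) _; rewrite hVT submxMl.
  rewrite -(mulmxKpV hF); move: (x s *m pinvmx F^T) => z.
  rewrite hVT /Lt !mulmxA.
  rewrite -(mulmxA (z *m F^T *m F *m iGF *m iGC) C C^T).
  rewrite -(mulmxA (z *m F^T *m F *m iGF) iGC (C *m C^T)) eGC' mulmx1.
  by rewrite -(mulmxA z F^T F) -(mulmxA z (F^T *m F) iGF) eGF mulmx1.
pose T := ({ffun 'I_N -> bool} + ({ffun 'I_N -> bool} * 'I_r))%type.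
pose fs : T -> {ffun 'I_N -> bool} := fun t => match t with inl s => s | inr u => u.1 end.
pose z : T -> 'rV[R]_r := fun t => match t with inl s => x s *m Lt | inr u => row u.2 Q end.
pose K : T -> 'rV[R]_(N * r) := fun t => kronv (x (fs t)) (z t).
pose M := \sum_(t : T) w (fs t) *: ((K t)^T *m K t).
have hblk : forall i j, blk M i j = \sum_(t : T) (w (fs t) * (x (fs t) 0 i * x (fs t) 0 j)) *: ((z t)^T *m z t).
  by move=> i j; rewrite /M /K blkEI.
have hdiag : forall i, blk M i i = 1%:M.
  move=> i; rewrite hblk big_sumType /=.
  under eq_bigr do rewrite x2 mulr1.
  under [X in _ + X]eq_bigr do rewrite x2 mulr1.
  have -> : \sum_(s : {ffun 'I_N -> bool}) w s *: ((x s *m Lt)^T *m (x s *m Lt)) = P.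
    rewrite -hXLt hX mulmx_sumr mulmx_suml; apply: eq_bigr => s _.
    by rewrite -scalemxAr -scalemxAl trmx_mul !mulmxA.
  rewrite -(pair_big predT predT (fun s p => w s *: ((row p Q)^T *m row p Q))) /=.
  rewrite (eq_bigr (fun s => w s *: Q)); last first.
    by move=> s _; rewrite -scaler_sumr sum_rowQ hQQ.
  by rewrite -scaler_suml w1 scale1r /Q addrC subrK.
have hvK : forall t, (mxvec V *m (K t)^T) 0 0 = (x (fs t) *m V *m (z t)^T) 0 0.
  by move=> t; rewrite /K vK dotV.
have hval : (mxvec V *m M *m (mxvec V)^T) 0 0 = (N ^ 2)%:R.
  rewrite /M quadSI big_sumType /=.
  rewrite [X in _ + X]big1 ?addr0; last first.
    move=> u _; rewrite hvK /=.
    have -> : (x u.1 *m V *m (row u.2 Q)^T) 0 0 = 0.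
      have -> : (x u.1 *m V *m (row u.2 Q)^T) 0 0 = (x u.1 *m V *m Q^T) 0 u.2.
        by rewrite !mxE; apply: eq_bigr => p _; rewrite !mxE.
      by rewrite hQs -mulmxA hVQ mulmx0 mxE.
    by rewrite mul0r mulr0.
  rewrite (eq_bigr (fun s => w s * (N%:R * N%:R))); last first.
    move=> s _; rewrite hvK /=.
    have [->|ws] := eqVneq (w s) 0; first by rewrite !mul0r.
    congr (_ * _).
    suff -> : (x s *m V *m (x s *m Lt)^T) 0 0 = N%:R by [].
    by rewrite dot_tr trmx_mul mulmxA hLtV //; exact: hxN.
  by rewrite -mulr_suml w1 mul1r natrX expr2.
exists M; split => //; split.
  split.
  - rewrite /M linear_sum /=; apply: eq_bigr => t _.
    by rewrite linearZ /= trmx_mul trmxK.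
  - move=> u; rewrite /M quadSI; apply: sumr_ge0 => t _; apply: mulr_ge0 => //.
    by rewrite -expr2 sqr_ge0.
  - exact: hdiag.
  - move=> i j; rewrite hblk linear_sum /=; apply: eq_bigr => t _.
    by rewrite linearZ /= trmx_mul trmxK.
have hNr : ((N * r)%:R : R) != 0 by rewrite pnatr_eq0 muln_eq0 negb_or -!lt0n hN hr.
have htr : \tr (((N * r)%:R)^-1 *: M) = 1.
  rewrite mxtraceZ trace_blk (eq_bigr _ (fun i _ => congr1 mxtrace (hdiag i))).
  rewrite (eq_bigr (fun _ => r%:R)) ?mxtrace1 // sumr_const card_ord.
  by rewrite -[r%:R *+ N]mulr_natl -natrM mulVf.
pose om : T -> R := fun t => ((N * r)%:R)^-1 * w (fs t) * (sqnorm (x (fs t)) * sqnorm (z t)).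
pose an : T -> 'rV[R]_N := fun t => nrm hN (x (fs t)).
pose bn : T -> 'rV[R]_r := fun t => nrm hr (z t).
have hrho : ((N * r)%:R)^-1 *: M
    = \sum_(k < #|(@predT T)|) om (enum_val k) *:
        ((kronv (an (enum_val k)) (bn (enum_val k)))^T *m kronv (an (enum_val k)) (bn (enum_val k))).
  rewrite /M scaler_sumr (big_enum_val (fun t => ((N * r)%:R)^-1 *: (w (fs t) *: ((K t)^T *m K t)))).
  apply: eq_bigr => k _; rewrite /K [in LHS](kron_norm hN hr) !scalerA.
  by rewrite /om /an /bn !mulrA.
split => //.
exists #|(@predT T)|, (fun k => om (enum_val k)), (fun k => an (enum_val k)), (fun k => bn (enum_val k)).
split => //.
- move=> k; rewrite /om; apply: mulr_ge0; last by apply: mulr_ge0; exact: sqnorm_ge0.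
  by apply: mulr_ge0 => //; rewrite invr_ge0 ler0n.
- rewrite -htr hrho raddf_sum /=; apply: eq_bigr => k _.
  rewrite mxtraceZ mxtrace_mulC /mxtrace big_ord1.
  by rewrite -/(sqnorm _) sqnorm_kron !nrm_unit !mulr1.
- by move=> k; exact: nrm_unit.
- by move=> k; exact: nrm_unit.
Qed.

Theorem proposition10 (R : rcfType) (N r : nat) (hN : (0 < N)%N)
    (V : 'M[R]_(N, r)) :
  cut_polytope (gram V) <->
  (\sum_(i < N) sqnorm (row i V) = N%:R /\
   exists M : 'M[R]_(N * r),
     Bsep M /\ (mxvec V *m M *m (mxvec V)^T) 0 0 = (N ^ 2)%:R).
Proof.
split; first exact: onlyif_dir.
by case=> h1 h2; exact: (if_dir hN h1 h2).
Qed.
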